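(* Let $\mathcal{R}$ be a set of rules on a finite set $Q$. For every critical rule $(A,q)$ of the antimatroid $\mathcal{A}(\mathcal{R})$, there exists a rule $(A',q)\in\mathcal{R}$ with $A\subseteq A'$.
   Context: A rule on $Q$ is a pair $(A,q)$ with $A\subseteq Q$, $q\in Q$; it accepts $Y\subseteq Q$ if $q\in Y$ implies $Y\cap A\neq\emptyset$. $\mathcal{K}(\mathcal{R})$ is the family of subsets accepted by all rules of $\mathcal{R}$, and $\mathcal{A}(\mathcal{R})$ is the family of $K\in\mathcal{K}(\mathcal{R})$ for which there is a sequence $\emptyset=Y_0\subseteq\dots\subseteq Y_k=K$ of members of $\mathcal{K}(\mathcal{R})$ with $|Y_{i+1}\setminus Y_i|=1$; it is an antimatroid. For an antimatroid $\mathcal{A}$ on $Q$, let $\mathcal{A}^*=\{Q\setminus X: X\in\mathcal{A}\}$ and $\tau(X)=\bigcap\{Y\in\mathcal{A}^*: X\subseteq Y\}$. A rule $(A,q)$ with $q\notin A$ is critical for $\mathcal{A}$ if, with $C=A\cup\{q\}$, $\tau(C)\setminus\{q\}\notin\mathcal{A}^*$ and $\tau(C)\setminus\{q,s\}\in\mathcal{A}^*$ for every $s\in A$. *)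

(* Defs.v *)
From mathcomp Require Import all_boot.
From mathcomp Require Import fintype finset path tuple.
Set Implicit Arguments. Unset Strict Implicit. Unset Printing Implicit Defensive.

Section Rules.
Variable Q : finType.

Definition rule := ({set Q} * Q)%type.

Definition accepts (r : rule) (Y : {set Q}) : bool :=
  (r.2 \in Y) ==> (Y :&: r.1 != set0).

Definition Kfam (R : {set rule}) : {set {set Q}} :=
  [set Y : {set Q} | [forall r in R, accepts r Y]].

Definition step (Y Y' : {set Q}) : bool := (Y \subset Y') && (#|Y' :\: Y| == 1).

(* A(R): members K of K(R) reachable from the empty set by a chain of
   members of K(R), each obtained from the previous one by adding one element. *)
Definition Afam (R : {set rule}) : {set {set Q}} :=
  [set K in Kfam R | [exists s : (#|Q|).-tuple {set Q}, exists n : 'I_(#|Q|.+1),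
     let ch := take n s in
     [&& all (fun Y => Y \in Kfam R) ch,
         path step set0 ch & last set0 ch == K]]].

Definition dualfam (F : {set {set Q}}) : {set {set Q}} := [set ~: X | X in F].

Definition tau (F : {set {set Q}}) (X : {set Q}) : {set Q} :=
  \bigcap_(Y in dualfam F | X \subset Y) Y.

Definition critical (F : {set {set Q}}) (r : rule) : Prop :=
  let C := r.2 |: r.1 in
  [/\ r.2 \notin r.1,
      tau F C :\ r.2 \notin dualfam F &
      forall s, s \in r.1 -> tau F C :\: [set r.2; s] \in dualfam F].

End Rules.

(* Main.v *)
Require Import Defs.
From mathcomp Require Import all_boot zify.
Set Implicit Arguments. Unset Strict Implicit. Unset Printing Implicit Defensive.

Section Aux.
Variable Q : finType.
Variable R : {set rule Q}.

Inductive acc : {set Q} -> Prop :=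
| acc0 : acc set0
| accS Y Y' : acc Y -> Y' \in Kfam R -> step Y Y' -> acc Y'.

Lemma K0 : set0 \in Kfam R.
Proof. rewrite inE; apply/forallP=> r; apply/implyP=> _; by rewrite /accepts inE. Qed.

Lemma KU U V : U \in Kfam R -> V \in Kfam R -> U :|: V \in Kfam R.
Proof.
rewrite !inE => /forallP HU /forallP HV; apply/forallP=> r; apply/implyP=> rR.
move: (HU r) (HV r); rewrite rR /= /accepts => /implyP hu /implyP hv.
apply/implyP; rewrite setIUl setU_eq0 negb_and in_setU.
by case/orP=> h; [rewrite hu | rewrite hv ?orbT].
Qed.

Lemma acc_K Y : acc Y -> Y \in Kfam R.
Proof. by case=> [|? ? _ ? _]; [exact: K0|]. Qed.

Lemma acc_add V x : acc V -> V :|: [set x] \in Kfam R -> acc (V :|: [set x]).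
Proof.
move=> aV K; case xV: (x \in V).
  have -> : V :|: [set x] = V.
    by apply/setP=> y; rewrite !inE; case: (y =P x) => [->|_]; rewrite ?xV ?orbF ?orbT.
  by [].
apply: accS aV K _; rewrite /step subsetUl /=.
apply/cards1P; exists x; apply/setP=> y; rewrite !inE.
case: (y =P x) => [->|_]; first by rewrite xV.
by rewrite orbF andNb.
Qed.

Lemma acc_U U V : acc U -> acc V -> acc (U :|: V).
Proof.
move=> aU; elim=> [|Y Y' aY IH KY' /andP [sub /cards1P [x Ex]]].
  by rewrite setU0.
have -> : U :|: Y' = (U :|: Y) :|: [set x].
  apply/setP=> y; rewrite !inE; apply/idP/idP.
    case/orP=> [->//|yY']; case yY: (y \in Y); first by rewrite orbT.
    have : y \in Y' :\: Y by rewrite inE yY yY'.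
    by rewrite Ex inE => ->; rewrite !orbT.
  case/orP=> [/orP [->//|/(subsetP sub) ->]|]; first by rewrite orbT.
  move=> /eqP ->; have : x \in Y' :\: Y by rewrite Ex inE.
  by rewrite inE => /andP [_ ->]; rewrite orbT.
apply: acc_add => //; rewrite -setUA.
have -> : Y :|: [set x] = Y' by rewrite -Ex -[RHS](setID Y' Y) (setIidPr sub).
exact: KU (acc_K aU) KY'.
Qed.

Lemma path_acc ch Y : acc Y -> all (fun Z => Z \in Kfam R) ch -> path (@step Q) Y ch ->
  acc (last Y ch).
Proof.
elim: ch Y => [|Z ch IH] Y aY //= /andP [KZ Ka] /andP [st pt].
apply: IH => //; exact: accS aY KZ st.
Qed.

Lemma Afam_acc K : K \in Afam R -> acc K.
Proof.
rewrite inE => /andP [_ /existsP [s /existsP [n /and3P [a p /eqP <-]]]].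
exact: path_acc acc0 a p.
Qed.

Lemma acc_chain K : acc K -> exists ch : seq {set Q},
  [/\ all (fun Y => Y \in Kfam R) ch, path (@step Q) set0 ch, last set0 ch = K &
      size ch = #|K|].
Proof.
elim=> [|Y Y' aY [ch [a p l sz]] KY' st]; first by exists [::]; rewrite cards0.
exists (rcons ch Y'); rewrite all_rcons rcons_path last_rcons size_rcons l KY' a p st.
split => //; move: st => /andP [sub /eqP c1].
move: c1; rewrite cardsD (setIidPr sub) => c1.
have := subset_leq_card sub; rewrite sz; move: c1.
move=> h1 h2; lia.
Qed.

Lemma acc_Afam K : acc K -> K \in Afam R.
Proof.
move=> aK; rewrite inE acc_K //=.
have [ch [a p l sz]] := acc_chain aK.
have le : size ch <= #|Q| by rewrite sz max_card.
pose pad := ch ++ nseq (#|Q| - size ch) set0.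
have Hsz : size pad == #|Q| by rewrite size_cat size_nseq subnKC.
apply/existsP; exists (Tuple Hsz); apply/existsP.
have ln : size ch < #|Q|.+1 by [].
exists (Ordinal ln) => /=.
by rewrite take_size_cat // a p l eqxx.
Qed.

End Aux.

Theorem lemma3p6 (Q : finType) (R : {set rule Q}) (A : {set Q}) (q : Q) :
  critical (Afam R) (A, q) ->
  exists A' : {set Q}, (A', q) \in R /\ A \subset A'.
Proof.
move=> [/= qA hT hs].
set T := tau (Afam R) (q |: A) in hT hs.
have accU : acc R (~: T).
  rewrite /T /tau setC_bigcap; apply: big_ind.
  - exact: acc0.
  - by move=> ? ?; apply: acc_U.
  - by move=> Y /andP [/imsetP [X XF ->] _]; rewrite setCK; apply: Afam_acc.
have KU := acc_K accU.
set Y := ~: T :|: [set q].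
have YnotA : Y \notin Afam R.
  apply: contra hT => h; apply/imsetP; exists Y => //.
  by rewrite /Y setCU setCK setDE.
have YnotK : Y \notin Kfam R.
  by apply: contra YnotA => h; apply: acc_Afam; apply: acc_add.
move: YnotK; rewrite inE => /forallPn [[B p]]; rewrite negb_imply /accepts /= => H.
move: H => /andP [pR]; rewrite negb_imply => /andP [pY /negPn /eqP YB].
have pq : p = q.
  move: pY; rewrite /Y in_setU in_set1 => /orP [pT|/eqP //].
  move: KU; rewrite inE => /forallP /(_ (B, p)); rewrite pR /accepts /= pT /=.
  case/set0Pn => y; rewrite inE => /andP [yT yB].
  have : y \in Y :&: B by rewrite !inE yB andbT; rewrite inE in yT; rewrite yT.
  by rewrite YB inE.
subst p; exists B; split => //.
apply/subsetP => s sA.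
have [X XF EX] := imsetP (hs s sA).
have EX' : X = Y :|: [set s].
  apply/setP=> y; move/setP: EX => /(_ y); rewrite !inE => E.
  apply/idP/idP => h.
    move: E; rewrite h /=; case: (y \in T); case: eqP; case: eqP => //.
  by move: E h; case: (y \in X); case: (y \in T); case: (y == q); case: (y == s).
move: XF; rewrite inE => /andP [XK _].
move: XK; rewrite inE => /forallP /(_ (B, q)); rewrite pR /accepts /= EX'.
rewrite !inE eqxx orbT /=.
case/set0Pn => y; rewrite !inE => /andP [/orP [yY|/eqP ->] yB] //.
have : y \in Y :&: B by rewrite inE yB andbT /Y !inE yY. 
by rewrite YB inE.
Qed.
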